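(* With notation as below, for all $M\ge1$, $0\le N\le M-1$, all $1\le x_1<\cdots<x_N\le M$, all $1\le y_1<\cdots<y_{N+1}\le M$ and all nonzero $u\in\mathbb{C}$, $$\langle x^\vee_1\cdots x^\vee_N|\,C(u)\,|y^\vee_1\cdots y^\vee_{N+1}\rangle=\langle y_1\cdots y_{N+1}|\,B(u)\,|x_1\cdots x_N\rangle,$$ where $x^\vee_j=M+1-x_{N+1-j}$ and $y^\vee_j=M+1-y_{N+2-j}$. Consequently, if $x_j=\lambda_{N-j+1}+j$, $y_j=\mu_{N-j+2}+j$ for integer sequences $M-N\ge\lambda_1\ge\cdots\ge\lambda_N\ge0$, $M-N-1\ge\mu_1\ge\cdots\ge\mu_{N+1}\ge0$, and $z=-\beta^{-1}-u^{-2}$, then $$(-\beta)^Nu^{1-M}\langle x_1\cdots x_N|C(u)|y_1\cdots y_{N+1}\rangle=G_{\mu^\vee/\lambda^\vee}(z;\beta),$$ with $\lambda^\vee_j=M-N-\lambda_{N+1-j}$, $\mu^\vee_j=M-N-1-\mu_{N+2-j}$.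
   Context: Fix nonzero $\beta\in\mathbb{C}$. Let $W_a=V_j=\mathbb{C}^2$ with basis $|0\rangle=(1,0)^T$, $|1\rangle=(0,1)^T$; $s=|0\rangle\langle0|$, $n=|1\rangle\langle1|$, $\sigma^+=|0\rangle\langle1|$, $\sigma^-=|1\rangle\langle0|$, subscripts indicating the tensor factor. $L_{aj}(u)=u\,s_as_j+\sigma_a^-\sigma_j^++\sigma_a^+\sigma_j^-+(-\beta^{-1}u-u^{-1})n_as_j-\beta^{-1}u\,n_an_j$ on $W_a\otimes V_j$; $T_a(u)=L_{aM}(u)\cdots L_{a1}(u)$ on $W_a\otimes V_1\otimes\cdots\otimes V_M$; $B(u)={}_a\langle0|T_a(u)|1\rangle_a$ and $C(u)={}_a\langle1|T_a(u)|0\rangle_a$. $|x_1\cdots x_N\rangle$ ($x_1<\cdots<x_N$) is the basis vector with $|1\rangle$ at the factors $x_j$ and $|0\rangle$ elsewhere; $\langle x_1\cdots x_N|$ is the dual basis vector. For a sequence $\mu$ with $N+1$ entries and $\lambda$ with $N$ entries, $G_{\mu/\lambda}(z;\beta)=z^{|\mu|-|\lambda|}\prod_{j=1}^N(1+\beta z-\beta z\,\delta_{\mu_{j+1},\lambda_j})$ if $\mu_j\ge\lambda_j\ge\mu_{j+1}$ for all $1\le j\le N$, and $0$ otherwise, where $|\lambda|=\sum\lambda_j$. *)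

(* Defs.v *)
From HB Require Import structures.
From mathcomp Require Import all_boot all_order all_algebra.
Set Implicit Arguments. Unset Strict Implicit. Unset Printing Implicit Defensive.
Import Order.TTheory GRing.Theory Num.Theory.
Local Open Scope ring_scope.

Section Model.
Variable C : numClosedFieldType.

(* Matrix entry  <a' j'| L_{aj}(u) |a j>  (false = |0>, true = |1>),
   first component = auxiliary space W_a, second = quantum space V_j. *)
Definition Lent (beta u : C) (a' j' a j : bool) : C :=
  match a', j', a, j with
  | false, false, false, false => u                          (* u s_a s_j *)
  | true,  false, false, true  => 1                          (* sigma_a^- sigma_j^+ *)
  | false, true,  true,  false => 1                          (* sigma_a^+ sigma_j^- *)
  | true,  false, true,  false => - beta^-1 * u - u^-1       (* n_a s_j *)
  | true,  true,  true,  true  => - beta^-1 * u              (* n_a n_j *)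
  | _, _, _, _ => 0
  end.

(* Matrix entry  <b'| (x) <out| T_a(u) |b> (x) |in>  of the monodromy matrix
   T_a(u) = L_{am}(u) ... L_{a1}(u) on W_a (x) V_1 (x) ... (x) V_m, where
   out, in : nat -> bool give the state of site i (1-based). *)
Fixpoint Tel (beta u : C) (m : nat) (b' b : bool) (out inn : nat -> bool) : C :=
  match m with
  | 0 => (b' == b)%:R
  | m'.+1 => \sum_(c : bool)
               Lent beta u b' (out m'.+1) c (inn m'.+1) * Tel beta u m' c b out inn
  end.

Definition conf (x : seq nat) : nat -> bool := fun i => i \in x.

(* <y| B(u) |x>  with B(u) = _a<0| T_a(u) |1>_a *)
Definition Bel (beta u : C) (M : nat) (y x : seq nat) : C :=
  Tel beta u M false true (conf y) (conf x).
(* <y| C(u) |x>  with C(u) = _a<1| T_a(u) |0>_a *)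
Definition Cel (beta u : C) (M : nat) (y x : seq nat) : C :=
  Tel beta u M true false (conf y) (conf x).

(* G_{mu/lam}(z; beta), mu with N+1 entries, lam with N entries (N = size lam),
   indices shifted to 0-based. *)
Definition Gskew (z beta : C) (mu lam : seq nat) : C :=
  if [forall i : 'I_(size lam),
        (nth 0 mu i.+1 <= nth 0 lam i <= nth 0 mu i)%N]
  then z ^ ((sumn mu)%:Z - (sumn lam)%:Z) *
       \prod_(i < size lam)
          (1 + beta * z - beta * z * (nth 0 mu i.+1 == nth 0 lam i)%:R)
  else 0.

End Model.

Definition dualpos (M : nat) (x : seq nat) : seq nat :=
  rev (map (fun a => (M.+1 - a)%N) x).

Definition validpos (M N : nat) (x : seq nat) : bool :=
  [&& size x == N, sorted ltn x & all (fun a => (1 <= a <= M)%N) x].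

(* Main.v *)
Require Import Defs.
From HB Require Import structures.
From mathcomp Require Import all_boot all_order all_algebra.
From mathcomp Require Import zify ring.
Import Order.TTheory GRing.Theory Num.Theory.
Local Open Scope ring_scope.

Section Part1.
Variable C : numClosedFieldType.
Variables beta u : C.

Lemma sumb (F : bool -> C) : \sum_(c : bool) F c = F true + F false.
Proof. by rewrite big_bool. Qed.

Lemma Lent_sym a b c d : Lent beta u a b c d = Lent beta u c d a b.
Proof. by case: a; case: b; case: c; case: d. Qed.

Lemma Tel_ext m b' b o i o' i' :
  (forall t, (0 < t <= m)%N -> o t = o' t /\ i t = i' t) ->
  Tel beta u m b' b o i = Tel beta u m b' b o' i'.
Proof.
elim: m b' => [//|m IH] b' H /=.
have [H1 H2] := H m.+1 (leqnn _).
rewrite H1 H2; apply: eq_bigr => c _; rewrite IH // => t /andP[t0 tm].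
by apply: H; rewrite t0 /= ltnW.
Qed.

Lemma TelS m b' b o i : Tel beta u m.+1 b' b o i =
  \sum_(c : bool) Lent beta u b' (o m.+1) c (i m.+1) * Tel beta u m c b o i.
Proof. by []. Qed.

Lemma Tel_peel m b' b o i :
  Tel beta u m.+1 b' b o i =
  \sum_(c : bool) Tel beta u m b' c (fun t => o t.+1) (fun t => i t.+1) *
                  Lent beta u c (o 1%N) b (i 1%N).
Proof.
elim: m b' => [|m IH] b'.
  rewrite /= !sumb; case: b'; case: b => /=; ring.
transitivity (\sum_(c : bool) Lent beta u b' (o m.+2) c (i m.+2) * Tel beta u m.+1 c b o i); first by [].
rewrite !sumb !IH !TelS !sumb; ring.
Qed.

Lemma Tel_rev m b' b o i :
  Tel beta u m b' b o i =
  Tel beta u m b b' (fun t => i (m.+1 - t)%N) (fun t => o (m.+1 - t)%N).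
Proof.
elim: m b' b o i => [|m IH] b' b o i.
  by rewrite /=; case: b'; case: b.
rewrite [RHS]Tel_peel.
transitivity (\sum_(c : bool) Lent beta u b' (o m.+1) c (i m.+1) * Tel beta u m c b o i); first by [].
rewrite !sumb (IH true b o i) (IH false b o i) subSS subn0.
rewrite !(Lent_sym b').
by rewrite [_ * Lent _ _ _ _ _ _]mulrC [_ * Lent _ _ _ _ _ _]mulrC.
Qed.
End Part1.

Lemma conf_dual M x t : all (fun a => (1 <= a <= M)%N) x -> (0 < t <= M)%N ->
  conf (dualpos M x) t = conf x (M.+1 - t)%N.
Proof.
move=> /allP hx /andP[t0 tM]; rewrite /conf /dualpos mem_rev.
apply/mapP/idP => [[a ax ->]|h].
  have /andP[a1 aM] := hx a ax.
  rewrite subKn //; lia.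
exists (M.+1 - t)%N => //; rewrite subKn //; lia.
Qed.

Lemma part1 (C : numClosedFieldType) (beta u : C) M N x y :
  validpos M N x -> validpos M N.+1 y ->
  Cel beta u M (dualpos M x) (dualpos M y) = Bel beta u M y x.
Proof.
move=> /and3P[_ _ hx] /and3P[_ _ hy].
rewrite /Bel Tel_rev /Cel; apply: Tel_ext => t ht.
by rewrite !conf_dual.
Qed.

Set Implicit Arguments. Unset Strict Implicit.

Section Sites.
Variable C : numClosedFieldType.
Variables beta u : C.
Variables o i : nat -> bool.
Notation T m b' b := (Tel beta u m b' b o i).
Definition ww := - beta^-1 * u - u^-1.
Definition qq := - beta^-1 * u.

Lemma sumb' (F : bool -> C) : \sum_(c : bool) F c = F true + F false.
Proof. by rewrite big_bool. Qed.

Lemma TE n b' b : o n.+1 = false -> i n.+1 = false ->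
  T n.+1 b' b = (if b' then ww else u) * T n b' b.
Proof. move=> ho hi; rewrite /= sumb' ho hi; case: b' => /=; rewrite /ww; ring. Qed.

Lemma TY n b' b : o n.+1 = false -> i n.+1 = true ->
  T n.+1 b' b = if b' then T n false b else 0.
Proof. move=> ho hi; rewrite /= sumb' ho hi; case: b' => /=; ring. Qed.

Lemma TX n b' b : o n.+1 = true -> i n.+1 = false ->
  T n.+1 b' b = if b' then 0 else T n true b.
Proof. move=> ho hi; rewrite /= sumb' ho hi; case: b' => /=; ring. Qed.

Lemma TXY n b' b : o n.+1 = true -> i n.+1 = true ->
  T n.+1 b' b = if b' then qq * T n true b else 0.
Proof. move=> ho hi; rewrite /= sumb' ho hi; case: b' => /=; rewrite /qq; ring. Qed.

Definition emp n k := forall t, (n < t <= n + k)%N -> o t = false /\ i t = false.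

Lemma Tseg n k b' b : emp n k ->
  T (n + k)%N b' b = (if b' then ww else u) ^+ k * T n b' b.
Proof.
elim: k => [|k IH] H; first by rewrite addn0 expr0 mul1r.
have /H [h1 h2] : (n < (n + k.+1) <= n + k.+1)%N by lia.
rewrite addnS TE -?addnS // IH; first by rewrite exprS mulrA.
move=> t ht; apply: H; lia.
Qed.

Lemma Tzero n m b : (n <= m)%N -> T n true b = 0 -> T n false b = 0 ->
  T m true b = 0 /\ T m false b = 0.
Proof.
move=> /subnK <- h1 h2; elim: (m - n)%N => [|k [IH1 IH2]]; first by rewrite add0n.
by rewrite addSn /= !sumb' IH1 ?IH2 // !mulr0 addr0.
Qed.

Lemma Lz0 n k b : emp n k -> o (n + k).+1 = true -> T n true b = 0 ->
  T (n + k).+1 true b = 0 /\ T (n + k).+1 false b = 0.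
Proof.
move=> he ho h1; have E := @Tseg n k true b he; rewrite h1 mulr0 in E.
case hi: (i (n + k).+1).
  by rewrite !TXY // E mulr0.
by rewrite !TX.
Qed.

Lemma Lz1 n k b : emp n k -> o (n + k).+1 = false -> i (n + k).+1 = true ->
  T n false b = 0 ->
  T (n + k).+1 true b = 0 /\ T (n + k).+1 false b = 0.
Proof.
move=> he ho hi h1; have E := @Tseg n k false b he; rewrite h1 mulr0 in E.
by rewrite !TY.
Qed.

Lemma A1 n k b : emp n k -> o (n + k).+1 = true -> i (n + k).+1 = false ->
  T n false b = 0 ->
  T (n + k).+1 true b = 0 /\ T (n + k).+1 false b = ww ^+ k * T n true b.
Proof. by move=> he ho hi h0; rewrite !TX // Tseg. Qed.

Lemma A2 n k b : emp n k -> o (n + k).+1 = true -> i (n + k).+1 = true ->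
  T n false b = 0 ->
  T (n + k).+1 true b = qq * ww ^+ k * T n true b /\ T (n + k).+1 false b = 0.
Proof. by move=> he ho hi h0; rewrite !TXY // Tseg // mulrA. Qed.

Lemma A0 n k b : emp n k -> o (n + k).+1 = false -> i (n + k).+1 = true ->
  T n true b = 0 ->
  T (n + k).+1 true b = u ^+ k * T n false b /\ T (n + k).+1 false b = 0.
Proof. by move=> he ho hi h0; rewrite !TY // Tseg. Qed.


Definition emp2 n t := forall s, (n < s < t)%N -> o s = false /\ i s = false.
Lemma emp2E n t : emp2 n t -> emp n (t - n - 1).
Proof. move=> H s hs; apply: H; lia. Qed.

Lemma Lz0' n t b : (n < t)%N -> emp2 n t -> o t = true -> T n true b = 0 ->
  T t true b = 0 /\ T t false b = 0.
Proof.
move=> nt he ho h; have E : (n + (t - n - 1)).+1 = t by lia.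
by have := @Lz0 n (t - n - 1) b (@emp2E n t he) (etrans (congr1 o E) ho) h; rewrite E.
Qed.
Lemma Lz1' n t b : (n < t)%N -> emp2 n t -> o t = false -> i t = true ->
  T n false b = 0 -> T t true b = 0 /\ T t false b = 0.
Proof.
move=> nt he ho hi h; have E : (n + (t - n - 1)).+1 = t by lia.
by have := @Lz1 n (t - n - 1) b (@emp2E n t he) (etrans (congr1 o E) ho) (etrans (congr1 i E) hi) h; rewrite E.
Qed.
Lemma A1' n t b : (n < t)%N -> emp2 n t -> o t = true -> i t = false ->
  T n false b = 0 ->
  T t true b = 0 /\ T t false b = ww ^+ (t - n - 1) * T n true b.
Proof.
move=> nt he ho hi h; have E : (n + (t - n - 1)).+1 = t by lia.
by have := @A1 n (t - n - 1) b (@emp2E n t he) (etrans (congr1 o E) ho) (etrans (congr1 i E) hi) h; rewrite E.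
Qed.
Lemma A2' n t b : (n < t)%N -> emp2 n t -> o t = true -> i t = true ->
  T n false b = 0 ->
  T t true b = qq * ww ^+ (t - n - 1) * T n true b /\ T t false b = 0.
Proof.
move=> nt he ho hi h; have E : (n + (t - n - 1)).+1 = t by lia.
by have := @A2 n (t - n - 1) b (@emp2E n t he) (etrans (congr1 o E) ho) (etrans (congr1 i E) hi) h; rewrite E.
Qed.
Lemma A0' n t b : (n < t)%N -> emp2 n t -> o t = false -> i t = true ->
  T n true b = 0 ->
  T t true b = u ^+ (t - n - 1) * T n false b /\ T t false b = 0.
Proof.
move=> nt he ho hi h; have E : (n + (t - n - 1)).+1 = t by lia.
by have := @A0 n (t - n - 1) b (@emp2E n t he) (etrans (congr1 o E) ho) (etrans (congr1 i E) hi) h; rewrite E.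
Qed.
Lemma Tseg' n t b' b : (n <= t)%N -> (forall s, (n < s <= t)%N -> o s = false /\ i s = false) ->
  T t b' b = (if b' then ww else u) ^+ (t - n) * T n b' b.
Proof.
move=> nt he; have E : (n + (t - n))%N = t by lia.
rewrite -{1}E Tseg // => s hs; apply: he; lia.
Qed.

End Sites.
Arguments ww {C}.
Arguments qq {C}.

Section Core.
Variable C : numClosedFieldType.
Variables beta u : C.
Variables (N M : nat) (X Y : nat -> nat).
Hypothesis hX : forall a b, (b < N)%N -> (a < b)%N -> (X a < X b)%N.
Hypothesis hY : forall a b, (b <= N)%N -> (a < b)%N -> (Y a < Y b)%N.
Hypothesis hY0 : (0 < Y 0)%N.
Hypothesis hYN : (Y N <= M)%N.
Hypothesis hX0 : (0 < X 0)%N.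

Definition oo t := t \in map X (iota 0 N).
Definition ii t := t \in map Y (iota 0 N.+1).
Notation T m b' b := (Tel beta u m b' b oo ii).

Lemma o_notin t : (forall k, (k < N)%N -> X k != t) -> oo t = false.
Proof.
move=> H; apply/negbTE/mapP => [[k]]; rewrite mem_iota add0n => /andP[_ hk] E.
by move: (H k hk); rewrite E eqxx.
Qed.
Lemma o_in k : (k < N)%N -> oo (X k) = true.
Proof. by move=> hk; apply: map_f; rewrite mem_iota add0n. Qed.
Lemma i_notin t : (forall k, (k <= N)%N -> Y k != t) -> ii t = false.
Proof.
move=> H; apply/negbTE/mapP => [[k]]; rewrite mem_iota add0n => /andP[_ hk] E.
by move: (H k hk); rewrite E eqxx.
Qed.
Lemma i_in k : (k <= N)%N -> ii (Y k) = true.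
Proof. by move=> hk; apply: map_f; rewrite mem_iota add0n. Qed.

Definition condA j := all (fun k => (Y k < X k) && (X k <= Y k.+1))%N (iota 0 j).
Definition condj j := condA j && ((j < N) ==> (Y j < X j))%N.
Definition SS k := ww beta u ^+ (X k - Y k - 1) *
   (if (X k < Y k.+1)%N then u ^+ (Y k.+1 - X k - 1) else qq beta u).

Lemma condA_lt j : condA j -> forall k, (k < j)%N -> (Y k < X k)%N /\ (X k <= Y k.+1)%N.
Proof.
move=> /allP H k hk; have : k \in iota 0 j by rewrite mem_iota; lia.
by move/H/andP.
Qed.

Lemma condAS j : condA j.+1 = condA j && ((Y j < X j) && (X j <= Y j.+1))%N.
Proof. by rewrite /condA -[in iota 0 j.+1]addn1 iotaD all_cat /= andbT. Qed.

Lemma condA_low j : (j <= N)%N -> condA j -> forall k, (k < j)%N -> (X k <= Y j)%N.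
Proof.
move=> jN hc k hk; have [_ h] := condA_lt hc hk.
case: (ltngtP k.+1 j) => c; last by rewrite -c.
  by have := hY jN c; lia.
lia.
Qed.


Lemma T0f : T 0 true false = 0. Proof. by []. Qed.


Lemma Xnotin j1 a b t : (forall k, (k < j1)%N -> (X k <= a)%N) ->
  ((j1 < N)%N -> (b <= X j1)%N) -> (a < t < b)%N -> oo t = false.
Proof.
move=> Ha Hb ht; apply: o_notin => k hk; apply/eqP => E.
case: (ltnP k j1) => c; first by have := Ha k c; lia.
have j1N : (j1 < N)%N by lia.
have := Hb j1N; case: (ltngtP j1 k) => c2; last by subst; lia.
- by have := hX hk c2; lia.
- lia.
Qed.

Lemma Yle a b : (b <= N)%N -> (a <= b)%N -> (Y a <= Y b)%N.
Proof. move=> bN; case: (ltngtP a b) => // c _; [have := hY bN c; lia | by subst]. Qed.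

Lemma Ynotin j t : (j < N)%N -> (Y j < t < Y j.+1)%N -> ii t = false.
Proof.
move=> jN ht; apply: i_notin => k hk; apply/eqP => E.
case: (leqP k j) => c; first by have := Yle (ltnW jN) c; lia.
by have := Yle hk c; lia.
Qed.
Lemma Ynotin0 t : (t < Y 0)%N -> ii t = false.
Proof. move=> ht; apply: i_notin => k hk; apply/eqP => E; have := Yle hk (leq0n k); lia. Qed.
Lemma YnotinN t : (Y N < t)%N -> ii t = false.
Proof. move=> ht; apply: i_notin => k hk; apply/eqP => E; have := Yle (leqnn N) hk; lia. Qed.

Lemma inv0 : T (Y 0) false false = 0 /\
  T (Y 0) true false = (if condj 0 then u ^+ (Y 0).-1 else 0).
Proof.
have Ha : forall k, (k < 0)%N -> (X k <= 0)%N by [].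
rewrite /condj /condA /=.
case: (ltnP 0 N) => hN /=.
  case: (ltnP (Y 0) (X 0)) => c0.
    have e : emp2 oo ii 0 (Y 0).
      move=> s hs; split; [apply: (Xnotin Ha (b := X 0)) => //; lia | apply: Ynotin0; lia].
    have ho : oo (Y 0) = false by apply: (Xnotin Ha (b := X 0)) => //; lia.
    have [-> ->] := A0' hY0 e ho (i_in (leq0n N)) T0f.
    by rewrite mulr1 subn0 subn1.
  have e : emp2 oo ii 0 (X 0).
    move=> s hs; split; [apply: (Xnotin Ha (b := X 0)) => //; lia | apply: Ynotin0; lia].
  have [h1 h2] := Lz0' hX0 e (o_in hN) T0f.
  by have := Tzero c0 h1 h2; case=> -> ->.
have e : emp2 oo ii 0 (Y 0).
  move=> s hs; split; [apply: o_notin => k hk; lia | apply: Ynotin0; lia].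
have ho : oo (Y 0) = false by apply: o_notin => k hk; lia.
have [-> ->] := A0' hY0 e ho (i_in (leq0n N)) T0f.
by rewrite mulr1 subn0 subn1.
Qed.

Definition V j := if condj j then u ^+ (Y 0).-1 * \prod_(k < j) SS k else 0.

Lemma invS j : (j < N)%N -> T (Y j) false false = 0 -> T (Y j) true false = V j ->
  T (Y j.+1) false false = 0 /\ T (Y j.+1) true false = V j.+1.
Proof.
move=> jN h0 h1.
have jN' : (j <= N)%N := ltnW jN.
have hYj : (Y j < Y j.+1)%N := hY jN (ltnSn j).
rewrite /V.
case hc: (condj j); last first.
  rewrite /V hc in h1.
  have [-> ->] := Tzero (ltnW hYj) h1 h0.
  have -> : condj j.+1 = false.
    move: hc; rewrite /condj condAS jN /=.
    by case: (condA j); case: (Y j < X j)%N.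
  by [].
have /andP[hA hXj] : condA j && (Y j < X j)%N by move: hc; rewrite /condj jN.
rewrite /V hc in h1.
have F1 := condA_low jN' hA.
case: (ltnP (Y j.+1) (X j)) => c1.
  have e : emp2 oo ii (Y j) (Y j.+1).
    move=> s hs; split; [apply: (Xnotin F1 (b := X j)) => //; lia | apply: (Ynotin jN); lia].
  have ho : oo (Y j.+1) = false by apply: (Xnotin F1 (b := X j)) => //; lia.
  have [-> ->] := Lz1' hYj e ho (i_in jN) h0.
  have -> : condj j.+1 = false by rewrite /condj condAS hA hXj /= leqNgt c1.
  by [].
have F2 : forall k, (k < j.+1)%N -> (X k <= X j)%N.
  move=> k hk; case: (ltngtP k j) => c; [by have := hX jN c; lia | lia | by subst].
have e : emp2 oo ii (Y j) (X j).
  move=> s hs; split; [apply: (Xnotin F1 (b := X j)) => //; lia | apply: (Ynotin jN); lia].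
case: (ltngtP (X j) (Y j.+1)) c1 => // c2 _.
  have hi : ii (X j) = false by apply: (Ynotin jN); lia.
  have [g1 g2] := A1' hXj e (o_in jN) hi h0.
  case hn: ((j.+1 < N) && (X j.+1 <= Y j.+1))%N.
    move/andP: hn => [hj1 hxy].
    have hXX : (X j < X j.+1)%N := hX hj1 (ltnSn j).
    have e2 : emp2 oo ii (X j) (X j.+1).
      move=> s hs; split; [apply: (Xnotin F2 (b := X j.+1)) => //; lia | apply: (Ynotin jN); lia].
    have [k1 k2] := Lz0' hXX e2 (o_in hj1) g1.
    have [-> ->] := Tzero hxy k1 k2.
    have -> : condj j.+1 = false by rewrite /condj condAS hA hXj /= (ltnW c2) /= hj1 /= ltnNge hxy.
    by [].
  have Hb : (j.+1 < N)%N -> ((Y j.+1).+1 <= X j.+1)%N.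
    by move=> hj1; move: hn; rewrite hj1 /= => /negbT; rewrite -ltnNge.
  have e2 : emp2 oo ii (X j) (Y j.+1).
    move=> s hs; split; [apply: (Xnotin F2 Hb); lia | apply: (Ynotin jN); lia].
  have ho : oo (Y j.+1) = false by apply: (Xnotin F2 Hb); lia.
  have [-> ->] := A0' c2 e2 ho (i_in jN) g1.
  rewrite g2 h1.
  have -> : condj j.+1 = true.
    rewrite /condj condAS hA hXj (ltnW c2) /=; apply/implyP => hj1; have := Hb hj1; lia.
  rewrite big_ord_recr /= /SS c2; split=> //; ring.
have hi : ii (X j) = true by rewrite c2; apply: i_in.
have [E1 E2] := A2' hXj e (o_in jN) hi h0.
rewrite c2 in E1 E2; rewrite E1 E2 h1.
have -> : condj j.+1 = true.
  rewrite /condj condAS hA hXj c2 leqnn /=; apply/implyP => hj1.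
  have := hX hj1 (ltnSn j); lia.
rewrite big_ord_recr /= /SS c2 ltnn; split=> //; ring.
Qed.

Lemma inv j : (j <= N)%N -> T (Y j) false false = 0 /\ T (Y j) true false = V j.
Proof.
elim: j => [_|j IH hj]; first by rewrite /V big_ord0 mulr1; exact: inv0.
have [a b] := IH (ltnW hj); exact: invS.
Qed.

Lemma core : T M true false =
  if condj N then u ^+ (Y 0).-1 * \prod_(k < N) SS k * ww beta u ^+ (M - Y N) else 0.
Proof.
have [h0 h1] := inv (leqnn N).
rewrite /V in h1.
case hc: (condj N); rewrite hc in h1; last first.
  by have [-> _] := Tzero hYN h1 h0.
move: hc; rewrite /condj ltnn andbT => hA.
rewrite (@Tseg' C beta u oo ii (Y N) M true false hYN); first by rewrite h1 mulrC.
move=> s hs; split; last by apply: YnotinN; lia.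
by apply: (Xnotin (condA_low (leqnn N) hA) (b := s.+1)); lia.
Qed.

End Core.

Lemma sumn_nth (s : seq nat) : sumn s = (\sum_(k < size s) nth 0 s k)%N.
Proof. by elim: s => [|a s IH]; rewrite ?big_ord0 // big_ord_recl /= IH. Qed.

Lemma fac (C : numClosedFieldType) (beta u : C) (hb : beta != 0) (hu : u != 0)
  (p r r1 : nat) (h1 : (r1 <= p)%N) (h2 : (p <= r)%N) :
  (-beta) * (ww beta u ^+ (r - p) * (if (r1 < p)%N then u ^+ (p - r1 - 1) else qq beta u))
  = (- beta^-1 - u^-2) ^+ (r - p) * u ^+ (r - r1 + 1) *
    (1 + beta * (- beta^-1 - u^-2) - beta * (- beta^-1 - u^-2) * (r1 == p)%:R).
Proof.
have Ew : ww beta u = u * (- beta^-1 - u^-2) by rewrite /ww; field; rewrite hu hb.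
rewrite Ew exprMn /qq.
case: (ltnP r1 p) => c.
  have -> : (r - r1 + 1 = (r - p) + (p - r1 - 1) + 2)%N by lia.
  rewrite (_ : (r1 == p) = false); last by apply/negbTE; rewrite neq_ltn c.
  rewrite mulr0 subr0 !exprD; field; by rewrite ?hu ?hb.
have E : r1 = p by lia.
subst; rewrite eqxx mulr1 exprD; field; by rewrite ?hu ?hb.
Qed.

Lemma part2 (C : numClosedFieldType) (beta : C) (hbeta : beta != 0)
    (M N : nat) (hM : (1 <= M)%N) (hN : (N <= M - 1)%N) :
  (forall (lam mu : seq nat) (u : C),
     size lam = N -> size mu = N.+1 ->
     sorted geq lam -> all (fun a => (a <= M - N)%N) lam ->
     sorted geq mu -> all (fun a => (a <= M - N - 1)%N) mu ->
     u != 0 ->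
     let x := [seq (nth 0 lam (N - j) + j)%N | j <- iota 1 N] in
     let y := [seq (nth 0 mu (N.+1 - j) + j)%N | j <- iota 1 N.+1] in
     let z := - beta^-1 - u^-2 in
     let lamv := [seq (M - N - nth 0 lam (N - j))%N | j <- iota 1 N] in
     let muv := [seq (M - N - 1 - nth 0 mu (N.+1 - j))%N | j <- iota 1 N.+1] in
     (- beta) ^+ N * u ^ (1 - M%:Z) * Cel beta u M x y = Gskew z beta muv lamv).
Proof.
move=> lam mu u hl hm sl al sm am hu x y z lamv muv.
have tr : transitive geq by move=> a b c h1 h2; exact: leq_trans h2 h1.
have ml := sorted_ltn_nth tr 0 sl.
have mm := sorted_ltn_nth tr 0 sm.
have lamb : forall k, (k < N)%N -> (nth 0 lam k <= M - N)%N.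
  by move=> k hk; apply: (allP al); apply: mem_nth; rewrite hl.
have mub : forall k, (k <= N)%N -> (nth 0 mu k <= M - N - 1)%N.
  by move=> k hk; apply: (allP am); apply: mem_nth; rewrite hm.
have lmon : forall a b, (b < N)%N -> (a < b)%N -> (nth 0 lam b <= nth 0 lam a)%N.
  move=> a b hb hab; apply: ml => //; rewrite inE hl //; lia.
have mmon : forall a b, (b <= N)%N -> (a < b)%N -> (nth 0 mu b <= nth 0 mu a)%N.
  move=> a b hb hab; apply: mm => //; rewrite inE hm //; lia.
pose X k := (nth 0 lam (N - k.+1) + k.+1)%N.
pose Y k := (nth 0 mu (N.+1 - k.+1) + k.+1)%N.
have hX : forall a b, (b < N)%N -> (a < b)%N -> (X a < X b)%N.
  move=> a b hb hab; rewrite /X; have := lmon (N - b.+1)%N (N - a.+1)%N; lia.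
have hY : forall a b, (b <= N)%N -> (a < b)%N -> (Y a < Y b)%N.
  move=> a b hb hab; rewrite /Y; have := mmon (N.+1 - b.+1)%N (N.+1 - a.+1)%N; lia.
have hY0 : (0 < Y 0)%N by rewrite /Y; lia.
have hYN : (Y N <= M)%N by rewrite /Y subnn; have := mub 0%N; lia.
have hX0 : (0 < X 0)%N by rewrite /X; lia.
have Ex : x = map X (iota 0 N).
  by rewrite /x (_ : iota 1 N = iota (1 + 0) N) // iotaDl -map_comp; apply: eq_map => j /=; rewrite /X add1n.
have Ey : y = map Y (iota 0 N.+1).
  by rewrite /y (_ : iota 1 N.+1 = iota (1 + 0) N.+1) // iotaDl -map_comp; apply: eq_map => j /=; rewrite /Y add1n.
have -> : Cel beta u M x y = Tel beta u M true false (oo N X) (ii N Y) by rewrite /Cel Ex Ey.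
rewrite (core beta u hX hY hY0 hYN hX0).
have slv : size lamv = N by rewrite /lamv size_map size_iota.
have hP : forall k, (k < N)%N -> nth 0 lamv k = (M - N - nth 0 lam (N - k.+1))%N.
  by move=> k hk; rewrite /lamv (nth_map 0%N) ?size_iota // nth_iota // add1n.
have hR : forall k, (k <= N)%N -> nth 0 muv k = (M - N - 1 - nth 0 mu (N - k))%N.
  by move=> k hk; rewrite /muv (nth_map 0%N) ?size_iota // nth_iota // add1n subSS.
pose P k := nth 0 lamv k. pose R k := nth 0 muv k.
have XP : forall k, (k < N)%N -> (X k + P k = M - N + k.+1)%N.
  move=> k hk; rewrite /P hP // /X; have := lamb (N - k.+1)%N; lia.
have YR : forall k, (k <= N)%N -> (Y k + R k = M - N + k)%N.
  move=> k hk; rewrite /R hR // /Y subSS; have := mub (N - k)%N; lia.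
have Pb : forall k, (k < N)%N -> (P k <= M - N)%N by move=> k hk; rewrite /P hP //; lia.
have Rb : forall k, (k <= N)%N -> (R k <= M - N - 1)%N by move=> k hk; rewrite /R hR //; lia.
have Econd : condj N X Y N = [forall i : 'I_N, (R i.+1 <= P i <= R i)%N].
  rewrite /condj ltnn andbT /condA; apply/allP/forallP => H.
    move=> i; have := H i; rewrite mem_iota add0n ltn_ord => /(_ isT) /andP[a b].
    have := XP i (ltn_ord i); have := YR i (ltnW (ltn_ord i)); have := YR i.+1 (ltn_ord i).
    move=> *; apply/andP; split; lia.
  move=> i; rewrite mem_iota add0n => /= hi; have /andP[a b] := H (Ordinal hi).
  have := XP i hi; have := YR i (ltnW hi); have := YR i.+1 hi; simpl in a, b.
  move=> *; apply/andP; split; lia.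
rewrite /Gskew slv -Econd.
case hc: (condj N X Y N); last by rewrite mulr0.
move: hc; rewrite Econd => /forallP H'.
have H : forall k, (k < N)%N -> (R k.+1 <= P k)%N /\ (P k <= R k)%N.
  by move=> k hk; have /andP[a b] := H' (Ordinal hk).
have SSe : forall k, (k < N)%N -> SS beta u X Y k = ww beta u ^+ (R k - P k) *
    (if (R k.+1 < P k)%N then u ^+ (P k - R k.+1 - 1) else qq beta u).
  move=> k hk; have := XP k hk; have := YR k (ltnW hk); have := YR k.+1 hk => e1 e2 e3.
  rewrite /SS (_ : (X k - Y k - 1 = R k - P k)%N); last by lia.
  rewrite (_ : (X k < Y k.+1)%N = (R k.+1 < P k)%N); last by apply/idP/idP; lia.
  by rewrite (_ : (Y k.+1 - X k - 1 = P k - R k.+1 - 1)%N) //; lia.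
have R0b : forall n, (n <= N)%N -> (R n <= R 0)%N.
  move=> n hn; case: n hn => [//|n] hn.
  rewrite /R !hR // subn0; have := mmon (N - n.+1)%N N (leqnn N); lia.
pose F k := 1 + beta * z - beta * z * (R k.+1 == P k)%:R.
have IND : forall n, (n <= N)%N -> (-beta) ^+ n * \prod_(k < n) SS beta u X Y k =
    z ^+ (\sum_(k < n) (R k - P k))%N * u ^+ (R 0 - R n + n) * \prod_(k < n) F k.
  elim=> [_|n IH hn]; first by rewrite !big_ord0 subnn expr0 !mulr1.
  have [a b] := H n hn.
  rewrite !big_ord_recr /= exprSr.
  transitivity (((-beta) ^+ n * \prod_(i < n) SS beta u X Y i) * ((-beta) * SS beta u X Y n)); first by ring.
  rewrite IH ?(ltnW hn) // SSe // fac //.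
  rewrite (_ : (R 0 - R n.+1 + n.+1 = (R 0 - R n + n) + (R n - R n.+1 + 1))%N); last first.
    have := R0b n (ltnW hn); lia.
  rewrite !exprD /F /z; ring.
have -> : (-beta) ^+ N * u ^ (1 - M%:Z) *
    (u ^+ (Y 0).-1 * \prod_(k < N) SS beta u X Y k * ww beta u ^+ (M - Y N)) =
    u ^ (1 - M%:Z) * u ^+ (Y 0).-1 * ww beta u ^+ (M - Y N) *
    ((-beta) ^+ N * \prod_(k < N) SS beta u X Y k) by ring.
have Ew : ww beta u = u * z by rewrite /ww /z; field; by rewrite hu.
rewrite IND // Ew exprMn.
have e0 := YR 0%N (leq0n N); have eN := YR N (leqnn N).
rewrite (_ : (M - Y N = R N)%N); last by lia.
rewrite (_ : (Y 0).-1 = M - N - 1 - R 0)%N; last by have := Rb 0%N (leq0n N); lia.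
pose a := (\sum_(k < N) (R k - P k))%N.
have sA : (a + \sum_(k < N) P k = \sum_(k < N) R k)%N.
  rewrite /a -big_split; apply: eq_bigr => k _ /=; have [_ b] := H k (ltn_ord k); lia.
have sM : sumn muv = (\sum_(k < N) R k + R N)%N.
  by rewrite sumn_nth (_ : size muv = N.+1) ?big_ord_recr // /muv size_map size_iota.
have sL : sumn lamv = (\sum_(k < N) P k)%N by rewrite sumn_nth slv.
rewrite (_ : (sumn muv)%:Z - (sumn lamv)%:Z = (a + R N)%N%:Z); last first.
  rewrite sM sL -sA; lia.
rewrite -exprnP exprD -/a.
have RNb := R0b N (leqnn N); have R0b' := Rb 0%N (leq0n N).
transitivity ((u ^ (1 - M%:Z) * u ^+ (M - N - 1 - R 0 + (R 0 - R N + N) + R N)) *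
   (z ^+ a * z ^+ R N * \prod_(i < N) F i)); first by rewrite !exprD; ring.
rewrite (_ : (M - N - 1 - R 0 + (R 0 - R N + N) + R N = M - 1)%N); last by lia.
rewrite (exprnP u (M - 1)) -expfzDr // (_ : 1 - M%:Z + (M - 1)%N%:Z = 0); last by lia.
by rewrite expr0z mul1r exprD.
Qed.

Unset Implicit Arguments. Set Strict Implicit.
Theorem mainTheorem5 (C : numClosedFieldType) (beta : C) (hbeta : beta != 0)
    (M N : nat) (hM : (1 <= M)%N) (hN : (N <= M - 1)%N) :
  (forall (x y : seq nat) (u : C),
     validpos M N x -> validpos M N.+1 y -> u != 0 ->
     Cel beta u M (dualpos M x) (dualpos M y) = Bel beta u M y x)
  /\
  (forall (lam mu : seq nat) (u : C),
     size lam = N -> size mu = N.+1 ->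
     sorted geq lam -> all (fun a => (a <= M - N)%N) lam ->
     sorted geq mu -> all (fun a => (a <= M - N - 1)%N) mu ->
     u != 0 ->
     let x := [seq (nth 0 lam (N - j) + j)%N | j <- iota 1 N] in
     let y := [seq (nth 0 mu (N.+1 - j) + j)%N | j <- iota 1 N.+1] in
     let z := - beta^-1 - u^-2 in
     let lamv := [seq (M - N - nth 0 lam (N - j))%N | j <- iota 1 N] in
     let muv := [seq (M - N - 1 - nth 0 mu (N.+1 - j))%N | j <- iota 1 N.+1] in
     (- beta) ^+ N * u ^ (1 - M%:Z) * Cel beta u M x y = Gskew z beta muv lamv).
Proof.
split.
  by move=> x y u hx hy _; apply: part1 hx hy.
exact: part2.
Qed.
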